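(* Let $S$ be a strongly finitely aligned $0$-left cancellative semigroup with right local units. Let $A$ be an associative $*$-algebra and $\pi:\mathcal H(S)\to A$ a cover-to-join $*$-representation such that $\pi(\mathcal H(S))$ spans $A$; write $\pi_s=\pi(\theta_s)$ for $s\in S$. Then $A$ is spanned by the elements $\pi_s\pi(f_\Lambda)\pi_t^*$ with $\Lambda\subseteq S$ finite and $s,t\in\Lambda$. If moreover $S$ is right reductive and categorical at zero, then $A$ is spanned by the elements $\pi_s\pi_t^*$ with $s,t\in S$.
   Context: $S$ has zero $0$, $S'=S\setminus\{0\}$; $0$-left cancellative: $st=sr\ne0\Rightarrow t=r$; right local units: each $s$ has an idempotent $e$ with $se=s$; right reductive: $sx=tx$ for all $x$ implies $s=t$; categorical at zero: $rs\ne0$, $st\ne0\Rightarrow rst\ne0$. Strongly finitely aligned: for all $s,t\in S$ there is a finite (possibly empty) $B\subseteq S'$ with $sS\cap tS=\bigcup_{b\in B}bS$ (read as $\{0\}$ if $B=\emptyset$) and $bS\cap b'S=\{0\}$ for distinct $b,b'\in B$. For $s\in S$: $F_s=\{x\in S':sx\ne0\}$, $\theta_s:F_s\to sS\setminus\{0\}$, $x\mapsto sx$; $\mathcal H(S)$ is the inverse semigroup of partial bijections of $S'$ generated by the $\theta_s$; for finite $\Lambda\subseteq S$, $f_\Lambda=\prod_{u\in\Lambda}\theta_u^{-1}\theta_u$ (identity on $\bigcap_{u\in\Lambda}F_u$). A $*$-representation is a map $\pi:\mathcal H(S)\to A$ with $\pi(0)=0$, $\pi(gh)=\pi(g)\pi(h)$,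 $\pi(g^{-1})=\pi(g)^*$. For an idempotent $e$ of $\mathcal H(S)$, idempotents $f_1,\dots,f_n\le e$ form a cover of $e$ if every nonzero idempotent $h\le e$ satisfies $hf_i\ne0$ for some $i$. $\pi$ is cover-to-join if for every such cover, $\prod_{i=1}^n(\pi(e)-\pi(f_i))=0$. *)

(* Defs.v *)
From HB Require Import structures.
From mathcomp Require Import all_boot all_order all_algebra.
Set Implicit Arguments. Unset Strict Implicit. Unset Printing Implicit Defensive.
Import Order.TTheory GRing.Theory Num.Theory.
Local Open Scope ring_scope.

Record semigroup0 := Semigroup0 {
  scar :> Type;
  sop : scar -> scar -> scar;
  szero : scar;
  sop_assoc : forall a b c, sop a (sop b c) = sop (sop a b) c;
  szero_l : forall a, sop szero a = szero;
  szero_r : forall a, sop a szero = szero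
}.

(** Propositional list membership / "all" (avoids eqType requirements). *)
Fixpoint InL {T : Type} (x : T) (l : seq T) : Prop :=
  match l with [::] => False | y :: l' => y = x \/ InL x l' end.
Fixpoint AllP {T : Type} (P : T -> Prop) (l : seq T) : Prop :=
  match l with [::] => True | y :: l' => P y /\ AllP P l' end.

Section SemigroupDefs.
Variable S : semigroup0.
Local Notation "a ** b" := (sop a b) (at level 40, left associativity).
Local Notation z := (szero S).

Definition zero_left_cancellative : Prop :=
  forall s t r : S, s ** t = s ** r -> s ** t <> z -> t = r.

Definition right_local_units : Prop :=
  forall s : S, exists e : S, e ** e = e /\ s ** e = s.

Definition right_reductive : Prop :=
  forall s t : S, (forall x : S, s ** x = t ** x) -> s = t.

Definition categorical_at_zero : Prop :=
  forall r s t : S, r ** s <> z -> s ** t <> z -> (r ** s) ** t <> z.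

Definition rideal (s : S) (x : S) : Prop := exists y : S, x = s ** y.

(** strongly finitely aligned; the union over an empty B is read as {0} *)
Definition strongly_finitely_aligned : Prop :=
  forall s t : S, exists B : seq S,
    AllP (fun b => b <> z) B /\
    (forall x : S, (rideal s x /\ rideal t x) <->
                   (x = z \/ exists b, InL b B /\ rideal b x)) /\
    (forall b b', InL b B -> InL b' B -> b <> b' ->
       forall x, rideal b x -> rideal b' x -> x = z).

(** * Partial bijections of S' = S \ {0}, represented by their graphs *)
Definition prel := S -> S -> Prop.

Definition Fdom (s : S) (x : S) : Prop := x <> z /\ s ** x <> z.
Definition theta (s : S) : prel := fun x y => Fdom s x /\ y = s ** x.

Definition pcomp (g h : prel) : prel := fun x w => exists y, h x y /\ g y w.
Definition pinv (g : prel) : prel := fun x y => g y x.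
Definition pzero : prel := fun _ _ => False.

Inductive inH : prel -> Prop :=
  | inH_gen s : inH (theta s)
  | inH_comp g h : inH g -> inH h -> inH (pcomp g h)
  | inH_inv g : inH g -> inH (pinv g).

(** f_Lambda = prod_{u in Lambda} theta_u^-1 theta_u = identity on the
    intersection of the F_u, u in Lambda *)
Definition fLam (L : seq S) : prel :=
  fun x y => x = y /\ x <> z /\ AllP (fun u => Fdom u x) L.

Definition idemH (e : prel) : Prop := inH e /\ pcomp e e = e.
Definition leH (f e : prel) : Prop := f = pcomp e f.
Definition is_cover (e : prel) (fs : seq prel) : Prop :=
  idemH e /\ AllP (fun f => idemH f /\ leH f e) fs /\
  (forall h, idemH h -> leH h e -> h <> pzero ->
     exists f, InL f fs /\ pcomp h f <> pzero).

End SemigroupDefs.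

Section StarAlg.
Variables (K : numClosedFieldType) (A : lmodType K)
          (mul : A -> A -> A) (star : A -> A).

Definition is_star_algebra : Prop :=
  (forall a b c, mul a (mul b c) = mul (mul a b) c) /\
  (forall a b c, mul a (b + c) = mul a b + mul a c) /\
  (forall a b c, mul (a + b) c = mul a c + mul b c) /\
  (forall (k : K) a b, mul (k *: a) b = k *: mul a b) /\
  (forall (k : K) a b, mul a (k *: b) = k *: mul a b) /\
  (forall a b, star (a + b) = star a + star b) /\
  (forall (k : K) a, star (k *: a) = (k^*) *: star a) /\
  (forall a, star (star a) = a) /\
  (forall a b, star (mul a b) = mul (star b) (star a)).

Definition in_span (P : A -> Prop) (a : A) : Prop :=
  exists l : seq (K * A), AllP (fun p => P p.2) l /\
                          a = \sum_(p <- l) p.1 *: p.2.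

Variable S : semigroup0.
Variable pi : prel S -> A.

(** *-representation of H(S) (pi only matters on H(S)) *)
Definition is_star_rep : Prop :=
  pi (@pzero S) = 0 /\
  (forall g h, inH g -> inH h -> pi (pcomp g h) = mul (pi g) (pi h)) /\
  (forall g, inH g -> pi (pinv g) = star (pi g)).

(** cover-to-join: for every cover f_1,...,f_n (n >= 1) of e,
    (pi e - pi f_1) ... (pi e - pi f_n) = 0.  (For n = 0 a cover forces
    e = 0, so nothing is lost by requiring n >= 1.) *)
Definition cover_to_join : Prop :=
  forall (e f : prel S) (fs : seq (prel S)), is_cover e (f :: fs) ->
    foldl (fun acc g => mul acc (pi e - pi g)) (pi e - pi f) fs = 0.

End StarAlg.

(* Main.v *)
Require Import Defs.
From HB Require Import structures.
From mathcomp Require Import all_boot all_order all_algebra.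
From Stdlib Require Import Classical FunctionalExtensionality PropExtensionality.
Set Implicit Arguments. Unset Strict Implicit.
Import Order.TTheory GRing.Theory Num.Theory.
Local Open Scope ring_scope.

Lemma AllP_InL T (P : T -> Prop) l : AllP P l <-> (forall x, InL x l -> P x).
Proof.
elim: l => [|y l IH] /=; first by split.
split.
- move=> [Hy /IH Hl] x [<-|Hx]; [done | exact: Hl].
- move=> H; split; [apply: H; by left | apply/IH => x Hx; apply: H; by right].
Qed.

Lemma InL_map T U (f : T -> U) l y : InL y (map f l) <-> exists x, InL x l /\ y = f x.
Proof.
elim: l => [|a l IH] /=; first by split => // [[x []]].
split.
- move=> [<-|H]; first by exists a; split; [left|].
  case: (proj1 IH H) => x [Hx ->]; exists x; split; [by right|done].
- move=> [x [[<-|Hx] Hy]]; first by left.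
  right; apply: (proj2 IH); by exists x.
Qed.

Lemma InL_cat T x (l1 l2 : seq T) : InL x (l1 ++ l2) <-> InL x l1 \/ InL x l2.
Proof.
elim: l1 => [|a l IH] /=; first by split; [right|case].
tauto.
Qed.

Lemma AllP_cat T (P : T -> Prop) l1 l2 : AllP P l1 -> AllP P l2 -> AllP P (l1 ++ l2).
Proof.
move=> /AllP_InL H1 /AllP_InL H2; apply/AllP_InL => x /InL_cat [] ?; [exact: H1|exact: H2].
Qed.

Fixpoint PwP {T : Type} (R : T -> T -> Prop) (l : seq T) : Prop :=
  match l with [::] => True | x :: l' => (forall y, InL y l' -> R x y) /\ PwP R l' end.

Section Rel.
Variable S : semigroup0.
Local Notation "a ** b" := (sop a b) (at level 40, left associativity).
Local Notation z := (szero S).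

Lemma prel_ext (r r' : prel S) : (forall x y, r x y <-> r' x y) -> r = r'.
Proof.
move=> H; apply: functional_extensionality => x; apply: functional_extensionality => y.
apply: propositional_extensionality; exact: H.
Qed.

Lemma nz_r (a b : S) : a ** b <> z -> b <> z.
Proof. by move=> H Hb; apply: H; rewrite Hb szero_r. Qed.
Lemma nz_l (a b : S) : a ** b <> z -> a <> z.
Proof. by move=> H Hb; apply: H; rewrite Hb szero_l. Qed.

Definition Idp (P : S -> Prop) : prel S := fun x y => x = y /\ P x.
Definition G (s : S) (L : seq S) (t : S) : prel S :=
  Defs.pcomp (theta s) (Defs.pcomp (fLam L) (pinv (theta t))).
Definition dom (g : prel S) (x : S) : Prop := exists y, g x y.

Lemma G_iff s L t x w : G s L t x w <-> exists y, x = t ** y /\ y <> z /\ t ** y <> z /\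
   (forall u, InL u L -> u ** y <> z) /\ s ** y <> z /\ w = s ** y.
Proof.
rewrite /G /Defs.pcomp /pinv /theta /fLam /Fdom; split.
- move=> [q [[y [[[Hy Hty] Hx] [Hyq [_ HA]]]] [[_ Hsq] Hw]]]; subst q.
  exists y; do !split => //. move=> u Hu; exact: ((proj1 (AllP_InL _ _) HA u Hu).2).
- move=> [y [Hx [Hy [Hty [HL [Hsy Hw]]]]]]. exists y; split; last by split.
  exists y; do !split => //.
  apply/AllP_InL => u Hu; split => //; exact: HL.
Qed.

Lemma X_iff s L q w : Defs.pcomp (theta s) (fLam L) q w <->
  q <> z /\ (forall l, InL l L -> l ** q <> z) /\ s ** q <> z /\ w = s ** q.
Proof.
rewrite /Defs.pcomp /theta /fLam /Fdom; split.
- move=> [y [[<- [Hq HA]] [[_ Hs] ->]]]; do !split => //.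
  move=> l Hl; exact: ((proj1 (AllP_InL _ _) HA l Hl).2).
- move=> [Hq [HL [Hs ->]]]; exists q; do !split => //.
  apply/AllP_InL => u Hu; split => //; exact: HL.
Qed.

Lemma Y_iff M v x r : Defs.pcomp (fLam M) (pinv (theta v)) x r <->
  x = v ** r /\ r <> z /\ v ** r <> z /\ (forall m, InL m M -> m ** r <> z).
Proof.
rewrite /Defs.pcomp /theta /fLam /Fdom /pinv; split.
- move=> [y [[[Hy Hvy] Hx] [<- [_ HA]]]]; do !split => //.
  move=> l Hl; exact: ((proj1 (AllP_InL _ _) HA l Hl).2).
- move=> [Hx [Hr [Hv HM]]]; exists r; do !split => //.
  apply/AllP_InL => u Hu; split => //; exact: HM.
Qed.

Lemma R3 s L t' N u' M v :
  Defs.pcomp (Defs.pcomp (theta s) (fLam L)) (Defs.pcomp (G t' N u') (Defs.pcomp (fLam M) (pinv (theta v))))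
  = G (s ** t') (map (fun l => l ** t') L ++ N ++ map (fun m => m ** u') M) (v ** u').
Proof.
apply: prel_ext => x w; rewrite G_iff; split.
- move=> [q [[r [/Y_iff [Hx [Hr [Hvr HM]]] /G_iff [y [Hry [Hy [Huy [HN [Hty Hq]]]]]]]] /X_iff [Hq0 [HL [Hsq Hw]]]]].
  subst r q.
  exists y; rewrite -!sop_assoc; do !split => //.
  move=> k /InL_cat [/InL_map [l [Hl ->]]|/InL_cat [Hk|/InL_map [m [Hm ->]]]].
  + by rewrite -sop_assoc; apply: HL.
  + exact: HN.
  + by rewrite -sop_assoc; apply: HM.
- move=> [y [Hx [Hy [Hvy [HL [Hsy Hw]]]]]].
  rewrite -sop_assoc in Hvy; rewrite -sop_assoc in Hsy.
  exists (t' ** y); split; last first.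
    apply/X_iff; do !split => //; [exact: nz_r Hsy| |by rewrite Hw sop_assoc].
    move=> l Hl; rewrite sop_assoc; apply: HL; apply/InL_cat; left; apply/InL_map; by exists l.
  exists (u' ** y); split.
    apply/Y_iff; do !split => //; [by rewrite Hx sop_assoc|exact: nz_r Hvy|].
    move=> m Hm; rewrite sop_assoc; apply: HL; apply/InL_cat; right; apply/InL_cat; right.
    apply/InL_map; by exists m.
  apply/G_iff; exists y; do !split => //; [exact: nz_r Hvy| |exact: nz_r Hsy].
  move=> n Hn; apply: HL; apply/InL_cat; right; apply/InL_cat; by left.
Qed.

End Rel.
Section Rel2.
Variable S : semigroup0.
Local Notation "a ** b" := (sop a b) (at level 40, left associativity).
Local Notation z := (szero S).
Variable hLC : zero_left_cancellative S.

Lemma cancel_unit (s e x : S) : s ** e = s -> s ** x <> z -> e ** x = x.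
Proof.
move=> Hse Hsx; apply: (@hLC s); first by rewrite sop_assoc Hse.
by rewrite sop_assoc Hse.
Qed.

Lemma theta_G (s e : S) : s ** e = s -> theta s = G s [:: s; e] e.
Proof.
move=> Hse; apply: prel_ext => x w; rewrite G_iff /theta /Fdom; split.
- move=> [[Hx Hsx] ->]; have Hex := cancel_unit Hse Hsx.
  exists x; do !split => //; first by rewrite Hex.
  by move=> u /= [<-|[<-|[]]] //; rewrite Hex.
- move=> [y [Hx [Hy [Hey [HL [Hsy Hw]]]]]].
  have Hsx : s ** x = s ** y by rewrite Hx sop_assoc Hse.
  by do !split; [rewrite Hx|rewrite Hsx|rewrite Hsx].
Qed.

Lemma pinv_G (s : S) L t : pinv (G s L t) = G t L s.
Proof.
apply: prel_ext => x w; rewrite /pinv !G_iff; split;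
  move=> [y [H1 [H2 [H3 [H4 [H5 H6]]]]]]; exists y; do !split => //.
Qed.

Lemma fLam1 (u : S) : fLam [:: u] = Defs.pcomp (pinv (theta u)) (theta u).
Proof.
apply: prel_ext => x y; rewrite /fLam /Defs.pcomp /pinv /theta /Fdom /=; split.
- move=> [<- [Hx [[_ Hux] _]]]; exists (u ** x); do !split => //.
- move=> [q [[[Hx Hux] ->] [[Hy Huy] Hq]]].
  have Hxy : x = y by apply: hLC; [exact: Hq | exact: Hux].
  subst y; do !split => //.
Qed.

Lemma fLam_cons (u : S) L : fLam (u :: L) = Defs.pcomp (fLam [:: u]) (fLam L).
Proof.
apply: prel_ext => x y; rewrite /fLam /Defs.pcomp /=; split.
- move=> [<- [Hx [Hu HA]]]; exists x; do !split => //.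
- by move=> [q [[<- [Hx HA]] [<- [_ [Hu _]]]]]; split; [|split; [|split]].
Qed.

Lemma inH_fLam (L : seq S) : L <> [::] -> inH (fLam L).
Proof.
elim: L => [//|u [|v L] IH] _; first by rewrite fLam1; apply: inH_comp; [apply: inH_inv|]; apply: inH_gen.
rewrite fLam_cons; apply: inH_comp; last by apply: IH.
by rewrite fLam1; apply: inH_comp; [apply: inH_inv|]; apply: inH_gen.
Qed.

Lemma inH_G (s : S) L t : L <> [::] -> inH (G s L t).
Proof.
move=> HL; apply: inH_comp; first exact: inH_gen.
apply: inH_comp; [exact: inH_fLam | apply: inH_inv; exact: inH_gen].
Qed.

Definition functional (g : prel S) := forall x y y', g x y -> g x y' -> y = y'.
Definition injectiv (g : prel S) := forall x x' y, g x y -> g x' y -> x = x'.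

Lemma inH_fi (g : prel S) : inH g -> functional g /\ injectiv g.
Proof.
elim=> {g} [s|g h _ [fg ig] _ [fh ih]|g _ [fg ig]].
- split; first by move=> x y y' [_ ->] [_ ->].
  move=> x x' y [[Hx Hsx] ->] [[Hx' Hsx'] Hy]; by apply: (@hLC s).
- split.
  + move=> x w w' [y1 [H1 G1]] [y2 [H2 G2]]; have E := fh _ _ _ H1 H2; subst y2; exact: fg G1 G2.
  + move=> x x' w [y1 [H1 G1]] [y2 [H2 G2]]; have E := ig _ _ _ G1 G2; subst y2; exact: ih H1 H2.
- by split; rewrite /pinv => x y y' H1 H2; [exact: ig H1 H2 | exact: fg H1 H2].
Qed.

Lemma comp_inv_Id (g : prel S) : injectiv g -> Defs.pcomp (pinv g) g = Idp (dom g).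
Proof.
move=> ig; apply: prel_ext => x w; rewrite /Defs.pcomp /pinv /Idp /dom; split.
- move=> [y [H1 H2]]; split; [exact: ig H1 H2 | by exists y].
- move=> [<- [y Hy]]; by exists y.
Qed.

Lemma Idp_comp (P Q : S -> Prop) : Defs.pcomp (Idp P) (Idp Q) = Idp (fun x => P x /\ Q x).
Proof.
apply: prel_ext => x w; rewrite /Defs.pcomp /Idp; split.
- by move=> [y [[<- Hq] [<- Hp]]].
- by move=> [<- [Hp Hq]]; exists x.
Qed.

Lemma Idp_ext (P Q : S -> Prop) : (forall x, P x <-> Q x) -> Idp P = Idp Q.
Proof. move=> H; apply: prel_ext => x y; rewrite /Idp; by rewrite H. Qed.

Lemma Idp_zero (P : S -> Prop) : (forall x, ~ P x) -> Idp P = @pzero S.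
Proof. move=> H; apply: prel_ext => x y; rewrite /Idp /pzero; split => // [[_ /H]] //. Qed.

Lemma comp_Idp (g : prel S) (P : S -> Prop) x y : Defs.pcomp g (Idp P) x y <-> P x /\ g x y.
Proof.
rewrite /Defs.pcomp /Idp; split; [by move=> [q [[<- Hp] Hg]] | by move=> [Hp Hg]; exists x].
Qed.

End Rel2.
Section Alg.
Variables (K : numClosedFieldType) (A : lmodType K)
          (mul : A -> A -> A) (star : A -> A).
Variable hA : is_star_algebra mul star.

Lemma mulA' a b c : mul a (mul b c) = mul (mul a b) c.
Proof. by case: hA. Qed.
Lemma mulDr' a b c : mul a (b + c) = mul a b + mul a c.
Proof. by case: hA => _ []. Qed.
Lemma mulDl' a b c : mul (a + b) c = mul a c + mul b c.
Proof. by case: hA => _ [_ []]. Qed.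
Lemma mulZl' (k : K) a b : mul (k *: a) b = k *: mul a b.
Proof. by case: hA => _ [_ [_ []]]. Qed.
Lemma mulZr' (k : K) a b : mul a (k *: b) = k *: mul a b.
Proof. by case: hA => _ [_ [_ [_ []]]]. Qed.
Lemma starD' a b : star (a + b) = star a + star b.
Proof. by case: hA => _ [_ [_ [_ [_ []]]]]. Qed.
Lemma starZ' (k : K) a : star (k *: a) = k^* *: star a.
Proof. by case: hA => _ [_ [_ [_ [_ [_ []]]]]]. Qed.

Lemma mul0l' c : mul 0 c = 0.
Proof. by have := mulZl' 0 0 c; rewrite !scale0r. Qed.
Lemma mul0r' c : mul c 0 = 0.
Proof. by have := mulZr' 0 c 0; rewrite !scale0r. Qed.
Lemma star0' : star 0 = 0.
Proof. by have := starZ' 0 0; rewrite conjC0 !scale0r. Qed.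
Lemma mulBl' a b c : mul (a - b) c = mul a c - mul b c.
Proof. by rewrite mulDl' -scaleN1r mulZl' scaleN1r. Qed.
Lemma mulBr' a b c : mul c (a - b) = mul c a - mul c b.
Proof. by rewrite mulDr' -scaleN1r mulZr' scaleN1r. Qed.

Lemma mul_suml' T (r : seq T) (F : T -> A) c :
  mul (\sum_(i <- r) F i) c = \sum_(i <- r) mul (F i) c.
Proof. elim: r => [|a r IH]; by rewrite ?big_nil ?mul0l' // !big_cons mulDl' IH. Qed.
Lemma mul_sumr' T (r : seq T) (F : T -> A) c :
  mul c (\sum_(i <- r) F i) = \sum_(i <- r) mul c (F i).
Proof. elim: r => [|a r IH]; by rewrite ?big_nil ?mul0r' // !big_cons mulDr' IH. Qed.

Local Notation span := (in_span (A:=A)).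

Lemma span0 P : span P 0.
Proof. by exists [::]; split; [|rewrite big_nil]. Qed.
Lemma span_gen (P : A -> Prop) a : P a -> span P a.
Proof. by move=> Pa; exists [:: (1, a)]; split; [split|rewrite big_seq1 scale1r]. Qed.
Lemma span_add P a b : span P a -> span P b -> span P (a + b).
Proof.
move=> [la [Ha ->]] [lb [Hb ->]]; exists (la ++ lb); split; first exact: AllP_cat.
by rewrite big_cat.
Qed.
Lemma span_scale P (k : K) a : span P a -> span P (k *: a).
Proof.
move=> [la [Ha ->]]; exists (map (fun p => (k * p.1, p.2)) la); split.
- apply/AllP_InL => x /InL_map [y [Hy ->]] /=; exact: (proj1 (AllP_InL _ _) Ha).
- rewrite big_map scaler_sumr; apply: eq_bigr => p _; by rewrite scalerA.
Qed.
Lemma span_big P T (r : seq T) (F : T -> A) :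
  (forall i, InL i r -> span P (F i)) -> span P (\sum_(i <- r) F i).
Proof.
elim: r => [|a r IH] H; first by rewrite big_nil; exact: span0.
rewrite big_cons; apply: span_add; first by apply: H; left.
apply: IH => i Hi; apply: H; by right.
Qed.
Lemma span_morph (f : A -> A) P Q a :
  (forall x y, f (x + y) = f x + f y) -> (forall (k : K) x, exists k', f (k *: x) = k' *: f x) ->
  f 0 = 0 -> (forall p, P p -> span Q (f p)) -> span P a -> span Q (f a).
Proof.
move=> fD fZ f0 H [l [Hl ->]]; elim: l Hl => [|p l IH] /= Hl.
  by rewrite big_nil f0; exact: span0.
case: Hl => Hp Hl; rewrite big_cons fD; apply: span_add; last exact: IH.
case: (fZ p.1 p.2) => k' ->; apply: span_scale; exact: H.
Qed.
Lemma span_trans P Q a : (forall p, P p -> span Q p) -> span P a -> span Q a.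
Proof.
move=> H; apply: (@span_morph id) => // k x; by exists k.
Qed.
Lemma span_mul P Q R a b : (forall p q, P p -> Q q -> span R (mul p q)) ->
  span P a -> span Q b -> span R (mul a b).
Proof.
move=> H Ha Hb; apply: (@span_morph (mul^~ b) P) Ha.
- by move=> x y; rewrite mulDl'.
- by move=> k x; exists k; rewrite mulZl'.
- exact: mul0l'.
move=> p Pp; apply: (@span_morph (mul p) Q) Hb.
- by move=> x y; rewrite mulDr'.
- by move=> k x; exists k; rewrite mulZr'.
- exact: mul0r'.
move=> q Qq; exact: H.
Qed.
Lemma span_star P Q a : (forall p, P p -> span Q (star p)) -> span P a -> span Q (star a).
Proof.
move=> H; apply: span_morph => //; [exact: starD' | move=> k x; exists k^*; exact: starZ' | exact: star0'].
Qed.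

Lemma eq_big_InL T (r : seq T) (F F' : T -> A) :
  (forall i, InL i r -> F i = F' i) -> \sum_(i <- r) F i = \sum_(i <- r) F' i.
Proof.
elim: r => [|a r IH] H; first by rewrite !big_nil.
rewrite !big_cons H; last by left.
by rewrite IH // => i Hi; apply: H; right.
Qed.

Lemma foldl_orth T (F : T -> A) (E : A) (ps qs : seq T) :
  mul E E = E ->
  (forall x, InL x (ps ++ qs) -> mul (F x) E = F x /\ mul E (F x) = F x) ->
  (forall p q, InL p ps -> InL q qs -> mul (F p) (F q) = 0) ->
  PwP (fun p q => mul (F p) (F q) = 0) qs ->
  foldl (fun acc g => mul acc (E - F g)) (E - \sum_(p <- ps) F p) qs = E - \sum_(p <- ps ++ qs) F p.
Proof.
elim: qs ps => [|q qs IH] ps HE Hid Hpq Hpw /=; first by rewrite cats0.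
have Hq : InL q (ps ++ q :: qs) by apply/InL_cat; right; left.
have -> : mul (E - \sum_(p <- ps) F p) (E - F q) = E - \sum_(p <- ps ++ [:: q]) F p.
  rewrite mulBl' !mulBr' HE !mul_suml' (proj2 (Hid q Hq)).
  rewrite (@eq_big_InL _ _ (fun i => mul (F i) E) F); last first.
    move=> i Hi; apply: (proj1 (Hid i _)); apply/InL_cat; by left.
  rewrite (@eq_big_InL _ _ (fun i => mul (F i) (F q)) (fun _ => 0)); last first.
    move=> i Hi; apply: Hpq => //; by left.
  rewrite big1_eq subr0 big_cat big_seq1 opprD addrA; by rewrite addrAC.
rewrite IH //.
- by rewrite -catA.
- by move=> x Hx; apply: Hid; rewrite -cat_rcons -cats1.
- move=> p q' /InL_cat [Hp|[<-|[]]] Hq'; [apply: Hpq => //; by right | exact: (proj1 Hpw)].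
- exact: (proj2 Hpw).
Qed.
End Alg.
Lemma PwP_impl T (R R' : T -> T -> Prop) l :
  (forall a b, InL a l -> InL b l -> R a b -> R' a b) -> PwP R l -> PwP R' l.
Proof.
elim: l => [//|x l IH] /= H [H1 H2]; split.
- move=> y Hy; apply: H; [by left|by right|exact: H1].
- apply: IH => // a b Ha Hb; apply: H; by right.
Qed.

Lemma PwP_map T U (f : T -> U) (R : U -> U -> Prop) l :
  PwP (fun a b => R (f a) (f b)) l -> PwP R (map f l).
Proof.
elim: l => [//|x l IH] /= [H1 H2]; split; last exact: IH.
move=> y /InL_map [a [Ha ->]]; exact: H1.
Qed.

Section Main.
Variable S : semigroup0.
Local Notation "a ** b" := (sop a b) (at level 40, left associativity).
Local Notation z := (szero S).
Variables (hSFA : strongly_finitely_aligned S) (hLC : zero_left_cancellative S)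
  (hRLU : right_local_units S).
Variables (K : numClosedFieldType) (A : lmodType K)
          (mul : A -> A -> A) (star : A -> A).
Variable hA : is_star_algebra mul star.
Variable pi : prel S -> A.
Variable hpi : is_star_rep mul star pi.
Variable hctj : cover_to_join mul pi.

Lemma pi0 : pi (@pzero S) = 0. Proof. by case: hpi. Qed.
Lemma piM g h : inH g -> inH h -> pi (Defs.pcomp g h) = mul (pi g) (pi h).
Proof. by case: hpi => _ [H _]; apply: H. Qed.
Lemma piV g : inH g -> pi (pinv g) = star (pi g).
Proof. by case: hpi => _ [_ H]; apply: H. Qed.

Definition disj (b c : S) := forall x, rideal b x -> rideal c x -> x = z.

Lemma mkT (t u : S) (B : seq S) :
  (forall b, InL b B -> b <> z /\ rideal t b /\ rideal u b) ->
  (forall b b', InL b B -> InL b' B -> b <> b' -> disj b b') ->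
  exists T : seq (S * S * S),
   (forall p, InL p T -> p.1.1 <> z /\ p.1.1 = t ** p.1.2 /\ p.1.1 = u ** p.2 /\ InL p.1.1 B) /\
   PwP (fun p q => disj p.1.1 q.1.1) T /\
   (forall b, InL b B -> exists p, InL p T /\ p.1.1 = b).
Proof.
elim: B => [|b B IH] H1 H2.
  by exists [::]; split; [|split].
have [T0 [HT0 [HP0 HC0]]] : exists T : seq (S * S * S),
   (forall p, InL p T -> p.1.1 <> z /\ p.1.1 = t ** p.1.2 /\ p.1.1 = u ** p.2 /\ InL p.1.1 B) /\
   PwP (fun p q => disj p.1.1 q.1.1) T /\
   (forall b, InL b B -> exists p, InL p T /\ p.1.1 = b).
  apply: IH; first by move=> c Hc; apply: H1; right.
  move=> c c' Hc Hc'; apply: H2; by right.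
case: (classic (exists p, InL p T0 /\ p.1.1 = b)) => [Hex|Hnex].
- exists T0; split; [|split] => //.
  + move=> p Hp; have [? [? [? ?]]] := HT0 p Hp; do !split => //; by right.
  + move=> c /= [<-|Hc]; [exact: Hex | exact: HC0].
- have [Hb [[tb Htb] [ub Hub]]] := H1 b (or_introl erefl).
  exists ((b, tb, ub) :: T0); split; [|split].
  + move=> p /= [<-|Hp] /=; first by do !split => //; left.
    have [? [? [? ?]]] := HT0 p Hp; do !split => //; by right.
  + split => //= q Hq; apply: H2; [by left| right; exact: (HT0 q Hq).2.2.2 |].
    move=> E; apply: Hnex; by exists q.
  + move=> c /= [<-|Hc]; first by exists (b, tb, ub); split => //; left.
    have [p [Hp Hpc]] := HC0 c Hc; exists p; split => //; by right.
Qed.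

Local Notation h p := (G p.1.2 [:: p.1.1] p.2).

Lemma KD (t u : S) : exists T : seq (S * S * S),
  pi (Defs.pcomp (pinv (theta t)) (theta u)) = \sum_(p <- T) pi (h p).
Proof.
have [B [HB0 [Hiff Hdisj]]] := hSFA t u.
have HB1 : forall b, InL b B -> b <> z /\ rideal t b /\ rideal u b.
  move=> b Hb; split; first exact: (proj1 (AllP_InL _ _) HB0 b Hb).
  have [e [_ Hbe]] := hRLU b.
  apply/(proj2 (Hiff b)); right; exists b; split => //; exists e; by rewrite Hbe.
have HB2 : forall b b', InL b B -> InL b' B -> b <> b' -> disj b b'.
  move=> b b' Hb Hb' Hne x; exact: Hdisj.
have [T [HT [HPw Hcov]]] := mkT HB1 HB2.
exists T.
set g := Defs.pcomp (pinv (theta t)) (theta u).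
have Hg : inH g by apply: inH_comp; [apply: inH_inv|]; apply: inH_gen.
have [fg ig] := inH_fi hLC Hg.
have Hh : forall p : S * S * S, inH (h p) by move=> p; apply: (inH_G hLC).
have hsub : forall p, InL p T -> forall x w, h p x w -> g x w.
  move=> [[b tb] ub] Hp x w /G_iff [y [Hx [Hy [Huy [HL [Hty Hw]]]]]].
  have [Hb [Htb [Hub _]]] := HT _ Hp; rewrite /= in Hb Htb Hub.
  have Hby : b ** y <> z by apply: HL; left.
  exists (u ** x); split.
  + split => //; split; first by rewrite Hx.
    by rewrite Hx sop_assoc -Hub.
  + split; last by rewrite Hw Hx !sop_assoc -Hub -Htb.
    split; first by rewrite Hw.
    by rewrite Hw sop_assoc -Htb.
have hcov : forall x, dom g x -> exists p, InL p T /\ dom (h p) x.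
  move=> x [w [q [[[Hx Hux] Hq] [[Hw Htw] Hq']]]].
  have : rideal t q /\ rideal u q by split; [exists w | exists x].
  move/(proj1 (Hiff q)) => [Hq0|[b [Hb [w' Hw']]]]; first by exfalso; apply: Hux; rewrite -Hq.
  have [p [Hp Hpb]] := Hcov b Hb.
  move: p Hp Hpb => [[b' tb] ub] Hp /= Hpb; subst b'.
  have [_ [Htb [Hub _]]] := HT _ Hp; rewrite /= in Htb Hub.
  have Hbw : b ** w' <> z by rewrite -Hw' Hq.
  have Hx' : x = ub ** w'.
    apply: (@hLC u); first by rewrite sop_assoc -Hub -Hw' Hq.
    done.
  exists (b, tb, ub); split => //; exists (tb ** w'); apply/G_iff; exists w'.
  do !split => //; [exact: nz_r Hbw | by rewrite -Hx' | | ].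
  + by move=> k /= [<-|[]].
  + by apply: (@nz_r _ t); rewrite sop_assoc -Htb.
have hdisj : forall p q, InL p T -> InL q T -> disj p.1.1 q.1.1 ->
    forall x, dom (h p) x -> dom (h q) x -> False.
  move=> [[b tb] ub] [[c tc] uc] Hp Hq /= Hbc x
    [w /G_iff [y [Hx [_ [_ [HL _]]]]]] [w' /G_iff [y' [Hx' _]]].
  have [_ [_ [Hub _]]] := HT _ Hp; have [_ [_ [Huc _]]] := HT _ Hq; rewrite /= in Hub Huc.
  have Hby : b ** y <> z by apply: HL; left.
  apply: Hby; rewrite -[LHS]/((b, tb, ub).1.1 ** y).
  have E1 : u ** x = b ** y by rewrite Hx sop_assoc -Hub.
  have E2 : u ** x = c ** y' by rewrite Hx' sop_assoc -Huc.
  rewrite /= -E1; apply: Hbc; [by exists y | by exists y'].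
case: T HT HPw Hcov hsub hcov hdisj => [|p0 T'] HT HPw Hcov hsub hcov hdisj.
  have -> : g = @pzero S.
    apply: prel_ext => x w; split => // Hg'.
    by have [p [[] _]] := hcov x (ex_intro _ w Hg').
  by rewrite pi0 big_nil.
set e := Defs.pcomp (pinv g) g.
have He : e = Idp (dom g) by apply: comp_inv_Id.
have HeH : inH e by apply: inH_comp => //; apply: inH_inv.
set f := fun p : S * S * S => Defs.pcomp (pinv (h p)) (h p).
have Hf : forall p, f p = Idp (dom (h p)).
  move=> p; apply: comp_inv_Id; exact: (proj2 (inH_fi hLC (Hh p))).
have HfH : forall p, inH (f p) by move=> p; apply: inH_comp => //; apply: inH_inv.
have Hfe : forall p, InL p (p0 :: T') -> Defs.pcomp e (f p) = f p /\ Defs.pcomp (f p) e = f p.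
  move=> p Hp; rewrite He Hf !Idp_comp; split; apply: Idp_ext => x; split; try tauto.
  + move=> Hx; split => //; case: Hx => w /(hsub p Hp) Hg'; by exists w.
  + move=> Hx; split => //; case: Hx => w /(hsub p Hp) Hg'; by exists w.
have Horth : forall p q, InL p (p0 :: T') -> InL q (p0 :: T') -> disj p.1.1 q.1.1 ->
    mul (pi (f p)) (pi (f q)) = 0.
  move=> p q Hp Hq Hpq; rewrite -piM // !Hf Idp_comp Idp_zero ?pi0 //.
  move=> x [H1 H2]; exact: (hdisj p q Hp Hq Hpq x H1 H2).
have Hcover : is_cover e (f p0 :: map f T').
  split; first by split => //; rewrite He Idp_comp; apply: Idp_ext => x; tauto.
  split.
    apply/AllP_InL => f' Hf'; have : InL f' (map f (p0 :: T')) by [].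
    move/InL_map => [p [Hp ->]]; split; first by split => //; rewrite Hf Idp_comp; apply: Idp_ext => x; tauto.
    rewrite /leH; by rewrite (proj1 (Hfe p Hp)).
  move=> hh [_ Hidem] Hle Hnz.
  have [x [w Hxw]] : exists x w, hh x w.
    apply: NNPP => Hn; apply: Hnz; apply: prel_ext => x w; split => // Hxw.
    apply: Hn; by exists x, w.
  rewrite -Hidem in Hxw; case: Hxw => y [Hxy Hyw].
  have Hdy : dom g y.
    move: Hxy; rewrite Hle => [[q [_]]]; rewrite He => [[<- Hq]] //.
  have [p [Hp Hdp]] := hcov y Hdy.
  exists (f p); split; first by apply/(InL_map f (p0 :: T')); exists p.
  move=> E; have : Defs.pcomp hh (f p) y w by rewrite Hf; apply/comp_Idp.
  by rewrite E.
have := hctj Hcover.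
have := @foldl_orth K A mul star hA _ pi (pi e) [:: f p0] (map f T').
rewrite big_seq1 => ->.
- move/eqP; rewrite subr_eq0 => /eqP HE.
  change ([:: f p0] ++ map f T') with (map f (p0 :: T')) in HE.
  have -> : g = Defs.pcomp g e.
    apply: prel_ext => x w; rewrite He comp_Idp; split; [move=> Hxw; split => //; by exists w | by case].
  rewrite piM // HE (mul_sumr' hA) big_map.
  apply: eq_big_InL => p Hp; rewrite -piM //; congr pi.
  apply: prel_ext => x w; rewrite Hf comp_Idp; split.
  + move=> [[w' Hw'] Hxw]; have := hsub p Hp _ _ Hw'; move/(fg _ _ _ Hxw) => ->; done.
  + move=> Hw; split; [by exists w | exact: hsub p Hp _ _ Hw].
- rewrite -piM // He Idp_comp; congr pi; apply: Idp_ext => x; tauto.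
- move=> x /= [<-|/InL_map [p [Hp ->]]].
    rewrite -!piM //; by rewrite (proj2 (Hfe p0 (or_introl erefl))) (proj1 (Hfe p0 (or_introl erefl))).
  rewrite -!piM //; by rewrite (proj2 (Hfe p (or_intror Hp))) (proj1 (Hfe p (or_intror Hp))).
- move=> x q [<-|[]] /InL_map [q' [Hq' ->]]; apply: Horth; [by left|by right|].
  exact: (proj1 HPw q' Hq').
- apply: PwP_map; apply: (PwP_impl _ (proj2 HPw)) => a b Ha Hb Hab.
  apply: Horth => //; by right.
Qed.


Lemma InL_nil (s : S) L : InL s L -> L <> [::].
Proof. by case: L. Qed.

Lemma pi_G s L t : L <> [::] ->
  pi (G s L t) = mul (mul (pi (theta s)) (pi (fLam L))) (star (pi (theta t))).
Proof.
move=> HL; have HfL := inH_fLam hLC HL.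
rewrite /G piM; [|exact: inH_gen|apply: inH_comp => //; apply: inH_inv; exact: inH_gen].
rewrite piM //; last by apply: inH_inv; exact: inH_gen.
by rewrite piV ?(mulA' hA) //; exact: inH_gen.
Qed.

Definition Qgen (b : A) := exists s L t, InL s L /\ InL t L /\ b = pi (G s L t).

Lemma prodQ p q : Qgen p -> Qgen q -> in_span Qgen (mul p q).
Proof.
move=> [s [L [t [HsL [HtL ->]]]]] [u [M [v [HuM [HvM ->]]]]].
have HL := InL_nil HsL; have HM := InL_nil HuM.
have HfL := inH_fLam hLC HL; have HfM := inH_fLam hLC HM.
have Hth : forall a : S, inH (theta a) by move=> a; exact: inH_gen.
have Hthi : forall a : S, inH (pinv (theta a)) by move=> a; apply: inH_inv.
set X := Defs.pcomp (theta s) (fLam L).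
set Y := Defs.pcomp (fLam M) (pinv (theta v)).
set g := Defs.pcomp (pinv (theta t)) (theta u).
have HX : inH X by apply: inH_comp.
have HY : inH Y by apply: inH_comp.
have Hg : inH g by apply: inH_comp.
have -> : mul (pi (G s L t)) (pi (G u M v)) = mul (pi X) (mul (pi g) (pi Y)).
  rewrite /G /X /Y /g !piM //; try (apply: inH_comp => //).
  by rewrite !(mulA' hA).
have [T HT] := KD t u.
rewrite HT (mul_suml' hA) (mul_sumr' hA).
apply: span_big => [[[b tb] ub]] Hp.
apply: span_gen; exists (s ** tb), (map (fun l => l ** tb) L ++ [:: b] ++ map (fun m => m ** ub) M), (v ** ub).
split; [|split].
- apply/InL_cat; left; apply/InL_map; by exists s.
- apply/InL_cat; right; apply/InL_cat; right; apply/InL_map; by exists v.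
- have HhG : inH (G tb [:: b] ub) by apply: (inH_G hLC).
  by rewrite -R3 -/X -/Y (piM HX) ?(piM HhG HY) //; apply: inH_comp.
Qed.

Lemma mainH g : inH g -> in_span Qgen (pi g).
Proof.
elim=> {g} [s|g h Hg IHg Hh IHh|g Hg IH].
- have [e [_ Hse]] := hRLU s.
  rewrite (theta_G hLC Hse); apply: span_gen; exists s, [:: s; e], e.
  by split; [left|split; [right; left|]].
- rewrite piM //; apply: (span_mul hA) IHg IHh; exact: prodQ.
- rewrite piV //; apply: (span_star hA) IH => p [s [L [t [HsL [HtL ->]]]]].
  have HL := InL_nil HsL.
  rewrite -piV; last exact: (inH_G hLC).
  rewrite pinv_G; apply: span_gen; by exists t, L, s.
Qed.

Lemma cat_gen (hcat : categorical_at_zero S) s L t : InL s L ->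
  pi (G s L t) = 0 \/ pi (G s L t) = mul (pi (theta s)) (star (pi (theta t))).
Proof.
move=> HsL; have [e [_ Hse]] := hRLU s.
case: (classic (exists l, InL l L /\ l ** e = z)) => [[l [Hl Hle]]|Hn].
- left; rewrite -pi0; congr pi; apply: prel_ext => x w; split => //.
  move/G_iff => [y [_ [Hy [_ [HL [Hsy _]]]]]].
  have Hey := cancel_unit hLC Hse Hsy.
  by apply: (HL l Hl); rewrite -Hey sop_assoc Hle szero_l.
- right; rewrite -piV; last exact: inH_gen.
  rewrite -piM; [|exact: inH_gen|apply: inH_inv; exact: inH_gen].
  congr pi; apply: prel_ext => x w; rewrite G_iff /Defs.pcomp /pinv /theta /Fdom; split.
  + move=> [y [Hx [Hy [Hty [HL [Hsy Hw]]]]]]; by exists y.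
  + move=> [y [[[Hy Hty] Hx] [[_ Hsy] Hw]]]; exists y; do !split => //.
    move=> l Hl; have Hey := cancel_unit hLC Hse Hsy.
    have Hle : l ** e <> z by move=> E; apply: Hn; exists l.
    rewrite -Hey sop_assoc; apply: hcat => //; by rewrite Hey.
Qed.

End Main.

Unset Implicit Arguments.

Theorem theorem15p17
  (S : semigroup0)
  (hSFA : strongly_finitely_aligned S)
  (hLC : zero_left_cancellative S)
  (hRLU : right_local_units S)
  (K : numClosedFieldType) (A : lmodType K)
  (mul : A -> A -> A) (star : A -> A)
  (hA : is_star_algebra mul star)
  (pi : prel S -> A)
  (hpi : is_star_rep mul star pi)
  (hctj : cover_to_join mul pi)
  (hspan : forall a : A, in_span (fun b => exists g, inH g /\ b = pi g) a) :
  (forall a : A,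
     in_span (fun b => exists (L : seq S) (s t : S),
                InL s L /\ InL t L /\
                b = mul (mul (pi (theta s)) (pi (fLam L))) (star (pi (theta t)))) a)
  /\
  (right_reductive S -> categorical_at_zero S ->
   forall a : A,
     in_span (fun b => exists s t : S, b = mul (pi (theta s)) (star (pi (theta t)))) a).
Proof.
have HQ : forall a, in_span (Qgen pi) a.
  move=> a; apply: span_trans (hspan a) => b [g [Hg ->]].
  exact: (mainH hSFA hLC hRLU hA hpi hctj Hg).
split.
- move=> a; apply: span_trans (HQ a) => b [s [L [t [HsL [HtL ->]]]]].
  apply: span_gen; exists L, s, t; do !split => //.
  exact: (pi_G hLC hA hpi s t (InL_nil HsL)).
- move=> _ hcat a; apply: span_trans (HQ a) => b [s [L [t [HsL [HtL ->]]]]].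
  case: (cat_gen hLC hRLU hpi hcat t HsL) => ->; first exact: span0.
  apply: span_gen; by exists s, t.
Qed.
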